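(* Let $\mathbb{M}$ be $\mathbb{T}^{n}$ or $\mathbb{S}^{n}$ and let $X$ be a polynomic vector field on $\mathbb{M}$. Then there exist a smooth embedding $\Psi: \mathbb{M} \rightarrow \mathbb{R}^{d}$, with $d$ depending only on $n$ and on the degree of $X$, and a homogeneous quadratic ODE on $\mathbb{R}^{d}$ \[ \frac{d y_i}{dt}=\sum_{j,k=1}^d B_{ijk} y_j y_k, \quad i=1,\dots,d, \] with real coefficients satisfying $B_{ijk}=-B_{kji}$ for all $i,j,k$, such that for every $x \in \mathbb{M}$, $y(t)=\Psi(\phi^{t}_{X}(x))$ is the solution of this ODE with initial condition $y(0)=\Psi(x)$ (here $\phi^t_X$ is the flow of $X$). Moreover, if $X$ is divergence-free on $\mathbb{M}$ (with respect to the round metric on $\mathbb{S}^n$, or the flat metric on $\mathbb{T}^{n}$), then the quadratic vector field $V(y)=\sum_{i,j,k} B_{ijk} y_j y_k \frac{\partial}{\partial y_i}$ is divergence-free on $\mathbb{R}^d$ with respect to the standard Euclidean metric.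
   Context: $\mathbb{T}^n=(\mathbb{R}/\mathbb{Z})^n$ and $\mathbb{S}^n\subset\mathbb{R}^{n+1}$ is the unit sphere. A vector field on $\mathbb{T}^n$ is called polynomic if it is a finite sum $\sum_k a_k\sin(2\pi k\cdot x)+b_k\cos(2\pi k\cdot x)$ with $k\in\mathbb{Z}^n$, $a_k,b_k\in\mathbb{R}^n$; its degree is the squared modulus $|k|^2$ of the highest frequency occurring. A vector field on $\mathbb{S}^n$ is called polynomic if it is the restriction of a polynomial vector field on $\mathbb{R}^{n+1}$ tangent to $\mathbb{S}^n$; its degree is the degree of that polynomial. *)

(* Defs.v *)
From HB Require Import structures.
From mathcomp Require Import all_boot all_order all_algebra.
From mathcomp Require Import all_classical all_reals all_analysis.
Set Implicit Arguments. Unset Strict Implicit. Unset Printing Implicit Defensive.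
Import Order.TTheory GRing.Theory Num.Theory.
Import numFieldNormedType.Exports.
Local Open Scope ring_scope.

Section Defs.
Variable R : realType.

Definition dotv (m : nat) (u v : 'rV[R]_m) : R := \sum_i u 0 i * v 0 i.
Definition ebasis (m : nat) (i : 'I_m) : 'rV[R]_m := delta_mx 0 i.

Fixpoint Ck (m p : nat) (k : nat) (f : 'rV[R]_m -> 'rV[R]_p) : Prop :=
  match k with
  | 0 => continuous f
  | k'.+1 => (forall x, differentiable f x) /\
             (forall v : 'rV[R]_m, Ck k' (fun x => 'D_v f x))
  end.
Definition smooth (m p : nat) (f : 'rV[R]_m -> 'rV[R]_p) : Prop :=
  forall k, Ck k f.

Definition divergence (m : nat) (F : 'rV[R]_m -> 'rV[R]_m) (x : 'rV[R]_m) : R :=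
  \sum_i ('D_(ebasis i) F x) 0 i.

(* Objects on T^n are represented by Z^n-periodic objects on R^n. *)
Definition int_vec (n : nat) (z : 'rV[R]_n) : Prop := forall i, z 0 i \is a Num.int.

Definition torus_polynomic_le (n N : nat) (X : 'rV[R]_n -> 'rV[R]_n) : Prop :=
  exists s : seq (('I_n -> int) * 'rV[R]_n * 'rV[R]_n),
    all (fun p => (\sum_i `|p.1.1 i|%N ^ 2 <= N)%N) s /\
    forall x : 'rV[R]_n,
      X x = \sum_(p <- s)
              (sin (2 * pi * \sum_i (p.1.1 i)%:~R * x 0 i) *: p.1.2 +
               cos (2 * pi * \sum_i (p.1.1 i)%:~R * x 0 i) *: p.2).

(* Smooth embedding T^n -> R^d, given as a Z^n-periodic smooth map on R^n
   that is injective modulo Z^n and an immersion (T^n is compact, so an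
   injective immersion is an embedding). *)
Definition torus_embedding (n d : nat) (Psi : 'rV[R]_n -> 'rV[R]_d) : Prop :=
  [/\ smooth Psi,
      (forall x z, int_vec z -> Psi (x + z) = Psi x),
      (forall x y, Psi x = Psi y -> int_vec (x - y)) &
      (forall x v, 'D_v Psi x = 0 -> v = 0)].

Definition integral_curve (n : nat) (X : 'rV[R]_n -> 'rV[R]_n) (g : R -> 'rV[R]_n)
  : Prop := forall t : R, is_derive t 1 g (X (g t)).

Definition torus_div_free (n : nat) (X : 'rV[R]_n -> 'rV[R]_n) : Prop :=
  forall x, divergence X x = 0.

Definition on_sphere (n : nat) (x : 'rV[R]_n.+1) : Prop := dotv x x = 1.

Definition monom (m : nat) (alpha : 'I_m -> nat) (x : 'rV[R]_m) : R :=
  \prod_i x 0 i ^+ alpha i.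
Definition poly_field_le (m N : nat) (X : 'rV[R]_m -> 'rV[R]_m) : Prop :=
  exists s : seq ('rV[R]_m * ('I_m -> nat)),
    all (fun p => (\sum_i p.2 i <= N)%N) s /\
    forall x, X x = \sum_(p <- s) monom p.2 x *: p.1.

Definition sphere_polynomic_le (n N : nat) (X : 'rV[R]_n.+1 -> 'rV[R]_n.+1) : Prop :=
  poly_field_le N X /\ (forall x, on_sphere x -> dotv x (X x) = 0).

(* Smooth embedding S^n -> R^d, given as (the restriction of) a smooth map
   on R^(n+1), injective on S^n, whose differential is injective on the
   tangent spaces T_x S^n = x^perp (S^n compact: injective immersion). *)
Definition sphere_embedding (n d : nat) (Psi : 'rV[R]_n.+1 -> 'rV[R]_d) : Prop :=
  [/\ smooth Psi,
      (forall x y, on_sphere x -> on_sphere y -> Psi x = Psi y -> x = y) &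
      (forall x v, on_sphere x -> dotv x v = 0 -> 'D_v Psi x = 0 -> v = 0)].

Definition sphere_integral_curve (n : nat) (X : 'rV[R]_n.+1 -> 'rV[R]_n.+1)
  (g : R -> 'rV[R]_n.+1) : Prop :=
  forall t : R, on_sphere (g t) /\ is_derive t 1 g (X (g t)).

(* Riemannian divergence on S^n (round metric) of a tangent field X given
   as the restriction of an ambient field: div_S X (x) = sum over an
   orthonormal basis e_a of T_x S^n of <D_{e_a} X, e_a>, i.e. the ambient
   trace of DX(x) minus its normal component <DX(x) x, x>. *)
Definition sphere_divergence (n : nat) (X : 'rV[R]_n.+1 -> 'rV[R]_n.+1)
  (x : 'rV[R]_n.+1) : R := divergence X x - dotv ('D_x X x) x.

Definition sphere_div_free (n : nat) (X : 'rV[R]_n.+1 -> 'rV[R]_n.+1) : Prop :=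
  forall x, on_sphere x -> sphere_divergence X x = 0.

Definition skewB (d : nat) (B : 'I_d -> 'I_d -> 'I_d -> R) : Prop :=
  forall i j k, B i j k = - B k j i.

Definition quadV (d : nat) (B : 'I_d -> 'I_d -> 'I_d -> R) (y : 'rV[R]_d)
  : 'rV[R]_d := \row_i (\sum_j \sum_k B i j k * y 0 j * y 0 k).

End Defs.

(* Main.v *)
Require Import Defs.
From HB Require Import structures.
From mathcomp Require Import all_boot all_order all_algebra.
From mathcomp Require Import all_classical all_reals all_analysis.
From mathcomp Require Import ring lra zify.
Set Implicit Arguments. Unset Strict Implicit. Unset Printing Implicit Defensive.
Import Order.TTheory GRing.Theory Num.Theory.
Import numFieldNormedType.Exports.
Local Open Scope ring_scope.

Section Gen.
Variable R : realType.

Lemma derive_const_line (V W : normedModType R) (f : V -> W) a v :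
  (forall h : R, f (h *: v + a) = f a) -> 'D_v f a = 0.
Proof.
move=> H; rewrite /derive.
have -> : (fun h : R => h^-1 *: ((f \o shift a) (h *: v) - f a)) = cst 0.
  by apply/funext => h /=; rewrite H subrr scaler0.
by apply: cvg_lim => //; apply: cvg_cst.
Qed.

Lemma D_coord m (x v : 'rV[R]_m) i : 'D_v (fun y : 'rV[R]_m => y 0 i) x = v 0 i.
Proof.
have := derive_mx (M := (id : _ -> 'M[R]_(1,m))) (@derivable_id _ _ x v).
by rewrite derive_id => /matrixP/(_ 0 i); rewrite mxE => <-.
Qed.

Lemma chain_rule m (phi : 'rV[R]_m -> R) (g : R -> 'rV[R]_m) t g' :
  differentiable phi (g t) -> is_derive t 1 g g' ->
  is_derive t 1 (phi \o g) ('D_g' phi (g t)).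
Proof.
move=> dphi [dg <-].
have dg' : differentiable g t by apply/derivable1_diffP.
have dc : differentiable (phi \o g) t by apply: differentiable_comp.
apply: DeriveDef; first exact/derivable1_diffP.
by rewrite deriveE // diff_comp // deriveE //= deriveE.
Qed.

Lemma is_derive_mx (V : normedModType R) m n (F : V -> 'M[R]_(m, n)) t v (L : 'M[R]_(m, n)) :
  (forall i j, is_derive t v (fun s => F s i j) (L i j)) -> is_derive t v F L.
Proof.
move=> H.
have dF : derivable F t v by apply/derivable_mxP => i j; case: (H i j).
apply: DeriveDef => //; rewrite derive_mx //; apply/matrixP => i j.
by rewrite mxE; case: (H i j).
Qed.


Lemma diff_sumseq (V W : normedModType R) (I : Type) (r : seq I) (G : I -> V -> W) x :
  (forall i, differentiable (G i) x) -> differentiable (fun y => \sum_(i <- r) G i y) x.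
Proof.
move=> H; elim: r => [|a r IH].
  under eq_fun do rewrite big_nil. exact: differentiable_cst.
under eq_fun do rewrite big_cons.
have -> : (fun y => G a y + \sum_(j <- r) G j y) = G a + (fun y => \sum_(j <- r) G j y) by [].
exact: differentiableD.
Qed.

Lemma derive_cos_comp m (f : 'rV[R]_m -> R) x v : differentiable f x ->
  'D_v (fun y => cos (f y)) x = - sin (f x) * 'D_v f x.
Proof.
move=> df.
have dc : differentiable (@cos R) (f x) by apply/derivable1_diffP; exact: derivable_cos.
have -> : (fun y => cos (f y)) = cos \o f by [].
rewrite deriveE; last exact: differentiable_comp.
rewrite diff_comp //= diff1E // derive1E (@derive_val _ _ _ _ _ _ _ (is_derive_cos (f x))).
by rewrite deriveE // mulrC.
Qed.

Lemma derive_sin_comp m (f : 'rV[R]_m -> R) x v : differentiable f x ->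
  'D_v (fun y => sin (f y)) x = cos (f x) * 'D_v f x.
Proof.
move=> df.
have dc : differentiable (@sin R) (f x) by apply/derivable1_diffP; exact: derivable_sin.
have -> : (fun y => sin (f y)) = sin \o f by [].
rewrite deriveE; last exact: differentiable_comp.
rewrite diff_comp //= diff1E // derive1E (@derive_val _ _ _ _ _ _ _ (is_derive_sin (f x))).
by rewrite deriveE // mulrC.
Qed.

Inductive Cl m : ('rV[R]_m -> R) -> Prop :=
| Cl_cst a : Cl (fun _ => a)
| Cl_coord i : Cl (fun x => x 0 i)
| Cl_add f g : Cl f -> Cl g -> Cl (fun x => f x + g x)
| Cl_mul f g : Cl f -> Cl g -> Cl (fun x => f x * g x)
| Cl_cos f : Cl f -> Cl (fun x => cos (f x))
| Cl_sin f : Cl f -> Cl (fun x => sin (f x)).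

Lemma Cl_diff m (f : 'rV[R]_m -> R) : Cl f -> forall x, differentiable f x.
Proof.
elim => {f}.
- by move=> a x; exact: differentiable_cst.
- by move=> i x; exact: differentiable_coord.
- move=> f g _ Hf _ Hg x.
  have -> : (fun y => f y + g y) = f + g by [].
  exact: differentiableD.
- move=> f g _ Hf _ Hg x.
  have -> : (fun y => f y * g y) = f * g by [].
  exact: differentiableM.
- move=> f _ Hf x; have -> : (fun y => cos (f y)) = cos \o f by [].
  apply: differentiable_comp => //; apply/derivable1_diffP; exact: derivable_cos.
- move=> f _ Hf x; have -> : (fun y => sin (f y)) = sin \o f by [].
  apply: differentiable_comp => //; apply/derivable1_diffP; exact: derivable_sin.
Qed.

Lemma Cl_D m (f : 'rV[R]_m -> R) v : Cl f -> Cl (fun x => 'D_v f x).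
Proof.
move=> Cf; elim: Cf v => {f}.
- move=> a v; have -> : (fun x => 'D_v (fun _ : 'rV[R]_m => a) x) = fun _ => 0.
    by apply/funext => x; exact: derive_cst.
  exact: Cl_cst.
- move=> i v; have -> : (fun x => 'D_v (fun y : 'rV[R]_m => y 0 i) x) = fun _ => v 0 i.
    by apply/funext => x; exact: D_coord.
  exact: Cl_cst.
- move=> f g Cf Hf Cg Hg v.
  have -> : (fun x => 'D_v (fun y => f y + g y) x) = fun x => 'D_v f x + 'D_v g x.
    apply/funext => x; have -> : (fun y => f y + g y) = f + g by [].
    by rewrite deriveD //; apply: diff_derivable; apply: Cl_diff.
  exact: Cl_add.
- move=> f g Cf Hf Cg Hg v.
  have -> : (fun x => 'D_v (fun y => f y * g y) x) =
            fun x => f x * 'D_v g x + g x * 'D_v f x.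
    apply/funext => x; have -> : (fun y => f y * g y) = f * g by [].
    by rewrite deriveM //; apply: diff_derivable; apply: Cl_diff.
  by apply: Cl_add; apply: Cl_mul.
- move=> f Cf Hf v.
  have -> : (fun x => 'D_v (fun y => cos (f y)) x) =
            fun x => (-1) * sin (f x) * 'D_v f x.
    by apply/funext => x; rewrite derive_cos_comp ?mulN1r //; apply: Cl_diff.
  by apply: Cl_mul => //; apply: Cl_mul; [exact: Cl_cst| exact: Cl_sin].
- move=> f Cf Hf v.
  have -> : (fun x => 'D_v (fun y => sin (f y)) x) =
            fun x => cos (f x) * 'D_v f x.
    by apply/funext => x; rewrite derive_sin_comp //; apply: Cl_diff.
  by apply: Cl_mul => //; exact: Cl_cos.
Qed.


Lemma row_fun_diff m p (F : 'I_p -> 'rV[R]_m -> R) x :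
  (forall i, differentiable (F i) x) ->
  differentiable (fun y => \row_i F i y : 'rV[R]_p) x.
Proof.
move=> H.
have -> : (fun y => \row_i F i y : 'rV[R]_p) =
          (fun y => \sum_(i <- index_enum 'I_p) (F i y *: (delta_mx 0 i : 'rV[R]_p))).
  apply/funext => y; rewrite {1}[\row_i F i y]row_sum_delta.
  by apply: eq_bigr => i _; rewrite mxE.
apply: (@diff_sumseq _ _ _ _ (fun i y => F i y *: (delta_mx 0 i : 'rV[R]_p))) => i.
exact: (@differentiableZl _ _ _ (F i) (delta_mx 0 i : 'rV[R]_p) x (H i)).
Qed.

Lemma row_fun_D m p (F : 'I_p -> 'rV[R]_m -> R) x v :
  (forall i, differentiable (F i) x) ->
  'D_v (fun y => \row_i F i y : 'rV[R]_p) x = \row_i 'D_v (F i) x.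
Proof.
move=> H.
have dF : derivable (fun y => \row_i F i y : 'rV[R]_p) x v.
  apply: diff_derivable; exact: (row_fun_diff H).
rewrite (derive_mx dF); apply/rowP => j; rewrite !mxE.
have -> : (fun t : 'rV[R]_m => (\row_i F i t : 'rV[R]_p) 0 j) = F j.
  by apply/funext => y; rewrite mxE.
by [].
Qed.

Lemma Cl_smooth m p (F : 'I_p -> 'rV[R]_m -> R) :
  (forall i, Cl (F i)) -> smooth (fun y => \row_i F i y : 'rV[R]_p).
Proof.
move=> H k; elim: k F H => [|k IH] F H.
  move=> x; apply: (@differentiable_continuous _ _ _ x (fun y => \row_i F i y : 'rV[R]_p)).
  apply: row_fun_diff => i; exact: Cl_diff.
split; first by move=> x; apply: row_fun_diff => i; exact: Cl_diff.
move=> v.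
have -> : (fun x => 'D_v (fun y => \row_i F i y : 'rV[R]_p) x) =
          (fun x => \row_i 'D_v (F i) x).
  apply/funext => x; apply: row_fun_D => i; exact: Cl_diff.
apply: (IH (fun i x => 'D_v (F i) x)) => i; exact: Cl_D.
Qed.

End Gen.

Section Core.
Variables (R : realType) (m : nat) (T : finType).
Variable phi : T -> 'rV[R]_m -> R.
Variable c : T -> T -> T -> R.

Definition ev (i : 'I_#|{: bool * T}|) : bool * T := enum_val i.
Definition PsiC (x : 'rV[R]_m) : 'rV[R]_#|{: bool * T}| := \row_i phi (ev i).2 x.
Definition BC (i j k : 'I_#|{: bool * T}|) : R :=
  if ((ev k).1 == (ev i).1) && ((ev j).1 != (ev i).1)
  then c (ev i).2 (ev k).2 (ev j).2 else 0.

Lemma sum_ev (F : bool * T -> R) :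
  \sum_(j < #|{: bool * T}|) F (ev j) = \sum_(b : bool) \sum_(J : T) F (b, J).
Proof.
rewrite /ev -(big_enum_val (A := predT)) /= pair_bigA /=.
by apply: eq_bigr => -[b J].
Qed.

Lemma ev_rank s : ev (enum_rank s) = s.
Proof. by rewrite /ev enum_rankK. Qed.

Hypothesis hc : forall I K J, c I K J = - c K I J.

Lemma c_diag I J : c I I J = 0.
Proof.
have := hc I I J; move/eqP; rewrite -subr_eq0 opprK -mulr2n mulrn_eq0 /=.
by move/eqP.
Qed.

Lemma BC_skew : skewB BC.
Proof.
move=> i j k; rewrite /BC [(ev i).1 == (ev k).1]eq_sym.
case: eqP => [E|_] /=; last by rewrite oppr0.
rewrite E; case: ifP => _; [exact: hc | by rewrite oppr0].
Qed.

Lemma BC_zero i j k : BC i j k != 0 -> (j != i) && (k != i).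
Proof.
rewrite /BC; case: ifP => [/andP[_ H] nz|]; last by rewrite eqxx.
apply/andP; split.
  by apply: contraNneq H => ->.
by apply: contraNneq nz => ->; rewrite c_diag.
Qed.

Lemma quadV_line (y : 'rV[R]_#|{: bool * T}|) (i : 'I_#|{: bool * T}|) (h : R) :
  quadV BC (h *: ebasis R i + y) 0 i = quadV BC y 0 i.
Proof.
rewrite !mxE; apply: eq_bigr => j _; apply: eq_bigr => k _.
have [->|nz] := eqVneq (BC i j k) 0; first by rewrite !mul0r.
move: (BC_zero nz) => /andP[ji ki].
by rewrite !mxE /ebasis (negbTE ji) (negbTE ki) andbF !mulr0 !add0r.
Qed.

Lemma Cl_sum m' (I : Type) (r : seq I) (F : I -> 'rV[R]_m' -> R) :
  (forall j, Cl (F j)) -> Cl (fun x => \sum_(j <- r) F j x).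
Proof.
move=> H; elim: r => [|a r IH].
  have -> : (fun x : 'rV[R]_m' => \sum_(j <- [::]) F j x) = fun _ => 0.
    by apply/funext => x; rewrite big_nil.
  exact: Cl_cst.
have -> : (fun x => \sum_(j <- a :: r) F j x) = fun x => F a x + \sum_(j <- r) F j x.
  by apply/funext => x; rewrite big_cons.
exact: Cl_add.
Qed.

Lemma quadV_Cl i : Cl (fun y : 'rV[R]_#|{: bool * T}| =>
   \sum_j \sum_k BC i j k * y 0 j * y 0 k).
Proof.
apply: Cl_sum => j; apply: Cl_sum => k.
apply: Cl_mul; last exact: Cl_coord.
apply: Cl_mul; [exact: Cl_cst | exact: Cl_coord].
Qed.

Lemma div_quadV y : divergence (quadV BC) y = 0.
Proof.
rewrite /divergence; apply: big1 => i _.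
rewrite /quadV (row_fun_D (F := fun i y => \sum_j \sum_k BC i j k * y 0 j * y 0 k));
  last by move=> l; apply: Cl_diff; apply: quadV_Cl.
rewrite mxE; apply: derive_const_line => h.
by have := quadV_line y i h; rewrite !mxE.
Qed.

Lemma sum_rank (G : 'I_#|{: bool * T}| -> R) :
  \sum_j G j = \sum_(b : bool) \sum_(J : T) G (enum_rank (b, J)).
Proof.
rewrite (reindex (@enum_rank _)) /=; last first.
  by exists enum_val => s _; [rewrite enum_rankK | rewrite enum_valK].
rewrite pair_bigA /=; by apply: eq_bigr => -[b J].
Qed.

Lemma quadV_PsiC x i :
  quadV BC (PsiC x) 0 i =
  \sum_K (\sum_J c (ev i).2 K J * phi J x) * phi K x.
Proof.
rewrite mxE.
under eq_bigr do under eq_bigr do rewrite !mxE.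
rewrite sum_rank.
under eq_bigr do under eq_bigr do rewrite sum_rank.
rewrite /BC.
have E s : ev (enum_rank s) = s by exact: ev_rank.
under eq_bigr => ? _ do under eq_bigr => ? _ do under eq_bigr => ? _ do under eq_bigr => ? _ do rewrite !E.
rewrite big_bool /=.
case: (ev i) => b I /=.
have fin : \sum_J \sum_K c I K J * phi J x * phi K x =
           \sum_K (\sum_J c I K J * phi J x) * phi K x.
  rewrite exchange_big; apply: eq_bigr => K _; rewrite mulr_suml.
  by apply: eq_bigr => J _; rewrite mulrAC.
case: b => /=.
- rewrite [X in X + _]big1 ?add0r => [|? _]; last first.
    by apply: big1 => ? _; apply: big1 => ? _; rewrite andbF !mul0r.
  rewrite -fin; apply: eq_bigr => J _; rewrite big_bool /= [X in _ + X]big1 ?addr0 //.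
  by move=> K _; rewrite !mul0r.
- rewrite [X in _ + X]big1 ?addr0 => [|? _]; last first.
    by apply: big1 => ? _; apply: big1 => ? _; rewrite andbF !mul0r.
  rewrite -fin; apply: eq_bigr => J _; rewrite big_bool /= [X in X + _]big1 ?add0r //.
  by move=> K _; rewrite !mul0r.
Qed.

Lemma PsiC_ode (P : 'rV[R]_m -> Prop) (X : 'rV[R]_m -> 'rV[R]_m) (g : R -> 'rV[R]_m) t :
  (forall I x, differentiable (phi I) x) ->
  (forall x, P x -> forall I,
     'D_(X x) (phi I) x = \sum_K (\sum_J c I K J * phi J x) * phi K x) ->
  P (g t) -> is_derive t 1 g (X (g t)) ->
  is_derive t 1 (PsiC \o g) (quadV BC (PsiC (g t))).
Proof.
move=> dphi HD Pg dg; apply: is_derive_mx => a j; rewrite (ord1 a) quadV_PsiC.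
have -> : (fun s => (PsiC \o g) s 0 j) = phi (ev j).2 \o g.
  by apply/funext => s; rewrite /= mxE.
rewrite -HD //; exact: chain_rule.
Qed.

Lemma PsiC_inj x y : PsiC x = PsiC y -> forall I, phi I x = phi I y.
Proof.
move=> E I; have := congr1 (fun M : 'rV[R]_#|{: bool * T}| => M 0 (enum_rank (true, I))) E.
by rewrite !mxE ev_rank.
Qed.

Lemma PsiC_D x v : (forall I, differentiable (phi I) x) ->
  'D_v PsiC x = 0 -> forall I, 'D_v (phi I) x = 0.
Proof.
move=> dphi E I.
have := congr1 (fun M : 'rV[R]_#|{: bool * T}| => M 0 (enum_rank (true, I))) E.
rewrite /PsiC (row_fun_D (F := fun i y => phi (ev i).2 y)); last by move=> l; exact: dphi.
by rewrite !mxE ev_rank.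
Qed.

Lemma PsiC_smooth : (forall I, Cl (phi I)) -> smooth PsiC.
Proof. move=> H; apply: (Cl_smooth (F := fun i y => phi (ev i).2 y)) => i; exact: H. Qed.

End Core.

Section Prod.
Variable R : realType.

Lemma diff_prodseq (V : normedModType R) (I : Type) (r : seq I) (G : I -> V -> R) x :
  (forall i, differentiable (G i) x) -> differentiable (fun y => \prod_(i <- r) G i y) x.
Proof.
move=> H; elim: r => [|a r IH].
  under eq_fun do rewrite big_nil. exact: differentiable_cst.
under eq_fun do rewrite big_cons.
have -> : (fun y => G a y * \prod_(j <- r) G j y) = G a * (fun y => \prod_(j <- r) G j y) by [].
exact: differentiableM.
Qed.

Lemma prod_notin (I : eqType) (s : seq I) a (F : I -> R) :
  a \notin s -> \prod_(j <- s | j != a) F j = \prod_(j <- s) F j.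
Proof.
move=> an; rewrite -big_filter; congr bigop.
apply/all_filterP/allP => j js; apply: contraNneq an => <-; exact: js.
Qed.

Lemma D_prod_seq m (I : eqType) (s : seq I) (f : I -> 'rV[R]_m -> R) x v :
  uniq s -> (forall i, differentiable (f i) x) ->
  'D_v (fun y => \prod_(i <- s) f i y) x =
  \sum_(i <- s) 'D_v (f i) x * \prod_(j <- s | j != i) f j x.
Proof.
move=> us df; elim: s us => [|a s IH] /= us.
  under eq_fun do rewrite big_nil. by rewrite derive_cst big_nil.
move/andP: us => [an us].
have -> : (fun y => \prod_(i <- a :: s) f i y) = f a * (fun y => \prod_(i <- s) f i y).
  by apply/funext => y; rewrite big_cons.
rewrite deriveM; first last.
- by apply: diff_derivable; apply: diff_prodseq.
- exact: diff_derivable.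
rewrite IH // big_cons /= big_cons eqxx /= prod_notin // addrC; congr (_ + _).
  by rewrite /GRing.scale /= mulrC.
rewrite /GRing.scale /= big_distrr /= big_seq [RHS]big_seq; apply: eq_bigr => i iin.
rewrite big_cons; have -> : (a != i) by apply: contraNneq an => ->.
by rewrite mulrCA.
Qed.

End Prod.

Section SphereA.
Variables (R : realType) (n N : nat).

Definition TS := ('I_N.+2 * {ffun 'I_N.+1 -> 'I_n.+1})%type.
Definition phiS (s : TS) (x : 'rV[R]_n.+1) : R :=
  \prod_(r < N.+1 | (r < s.1)%N) x 0 (s.2 r).

Lemma Cl_prod m' (I : Type) (r : seq I) (F : I -> 'rV[R]_m' -> R) :
  (forall j, Cl (F j)) -> Cl (fun x => \prod_(j <- r) F j x).
Proof.
move=> H; elim: r => [|a r IH].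
  have -> : (fun x : 'rV[R]_m' => \prod_(j <- [::]) F j x) = fun _ => 1.
    by apply/funext => x; rewrite big_nil.
  exact: Cl_cst.
have -> : (fun x => \prod_(j <- a :: r) F j x) = fun x => F a x * \prod_(j <- r) F j x.
  by apply/funext => x; rewrite big_cons.
exact: Cl_mul.
Qed.

Lemma Cl_phiS s : Cl (phiS s).
Proof.
have -> : phiS s = fun x => \prod_(r <- index_enum 'I_N.+1)
                     (fun (r : 'I_N.+1) (y : 'rV[R]_n.+1) => if (r < s.1)%N then y 0 (s.2 r) else 1) r x.
  by apply/funext => x; rewrite /phiS [LHS]big_mkcond.
apply: Cl_prod => r /=; case: (r < s.1)%N; [exact: Cl_coord | exact: Cl_cst].
Qed.

Lemma phiS_D e I x v : 'D_v (phiS (e, I)) x =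
  \sum_(r < N.+1 | (r < e)%N) v 0 (I r) *
     \prod_(r' < N.+1 | (r' < e)%N && (r' != r)) x 0 (I r').
Proof.
have -> : phiS (e, I) = fun y => \prod_(r <- [seq r : 'I_N.+1 <- index_enum 'I_N.+1 | (r < e)%N]) y 0 (I r).
  by apply/funext => y; rewrite /phiS big_filter.
rewrite D_prod_seq; first last.
- by move=> i; exact: differentiable_coord.
- exact/filter_uniq/index_enum_uniq.
rewrite big_filter; apply: eq_bigr => r _; rewrite D_coord big_filter_cond //.
Qed.

Definition upd (I : {ffun 'I_N.+1 -> 'I_n.+1}) r k : {ffun 'I_N.+1 -> 'I_n.+1} :=
  [ffun r' => if r' == r then k else I r'].

Lemma sum_delta (U : finType) (a : U) (F : U -> R) : \sum_K (K == a)%:R * F K = F a.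
Proof.
rewrite (bigD1 a) //= eqxx mul1r big1 ?addr0 // => K /negbTE ->; by rewrite mul0r.
Qed.

Lemma sum_upd I r (F : {ffun 'I_N.+1 -> 'I_n.+1} -> R) :
  \sum_(K : {ffun 'I_N.+1 -> 'I_n.+1}) (K == upd I r (K r))%:R * F K = \sum_k F (upd I r k).
Proof.
under [RHS]eq_bigr => k _ do rewrite -(sum_delta (upd I r k) F).
rewrite exchange_big /=; apply: eq_bigr => K _; rewrite -mulr_suml; congr (_ * _).
rewrite (bigD1 (K r)) //= big1 ?addr0 // => k kn.
case: eqP => // E; move: kn; rewrite E /upd ffunE eqxx eqxx.
by [].
Qed.

Lemma upd_sym (I K : {ffun 'I_N.+1 -> 'I_n.+1}) (r : 'I_N.+1) : (K == upd I r (K r)) = (I == upd K r (I r)).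
Proof.
apply/eqP/eqP => H; apply/ffunP => r'; rewrite ffunE; case: eqP => [->//|ne];
  by rewrite H ffunE; case: eqP.
Qed.

Lemma phiS_upd (e : 'I_N.+2) I (r : 'I_N.+1) (k : 'I_n.+1) (x : 'rV[R]_n.+1) : (r < e)%N ->
  phiS (e, upd I r k) x = x 0 k * \prod_(r' < N.+1 | (r' < e)%N && (r' != r)) x 0 (I r').
Proof.
move=> re; rewrite /phiS /= (bigD1 r) //= ffunE eqxx; congr (_ * _).
by apply: eq_bigr => r' /andP[_ ne]; rewrite ffunE (negbTE ne).
Qed.

End SphereA.

Section SphereB.
Variables (R : realType) (n N : nat).

Definition word (al : 'I_n.+1 -> nat) (k : 'I_n.+1) : seq 'I_n.+1 :=
  k :: flatten [seq nseq (al i) i | i <- index_enum 'I_n.+1].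

Lemma size_word al k : size (word al k) = (\sum_i al i).+1.
Proof.
rewrite /= size_flatten /shape -map_comp sumnE big_map; congr S.
by apply: eq_bigr => i _; rewrite /= size_nseq.
Qed.

Definition wrd (al : 'I_n.+1 -> nat) (k : 'I_n.+1) : TS n N :=
  (inord (\sum_i al i).+1, [ffun r : 'I_N.+1 => nth k (word al k) r]).

Lemma prod_nseq (F : 'I_n.+1 -> R) k a : \prod_(j <- nseq k a) F j = F a ^+ k.
Proof. by elim: k => [|k IH]; [rewrite big_nil expr0 | rewrite /= big_cons IH exprS]. Qed.

Lemma phiS_wrd al k (x : 'rV[R]_n.+1) : (\sum_i al i <= N)%N ->
  phiS (wrd al k) x = x 0 k * monom al x.
Proof.
move=> hs; rewrite /phiS /wrd /= inordK ?ltnS //.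
under eq_bigr => r _ do rewrite ffunE.
rewrite -(big_ord_widen _ (fun r => x 0 (nth k (word al k) r))) ?ltnS //.
rewrite -(size_word al k) -(big_mkord xpredT (fun i => x 0 (nth k (word al k) i))).
rewrite -(big_nth k xpredT (fun j => x 0 j)).
rewrite /word big_cons big_flatten /= big_map /monom; congr (_ * _).
by apply: eq_bigr => i _; rewrite prod_nseq.
Qed.

End SphereB.

Section SphereC.
Variables (R : realType) (n N : nat).
Variable s0 : seq ('rV[R]_n.+1 * ('I_n.+1 -> nat)).
Hypothesis hs0 : all (fun p => (\sum_i p.2 i <= N)%N) s0.

Definition cp (i k : 'I_n.+1) (J : TS n N) : R :=
  \sum_(p <- s0) (p.1 0 i * (J == wrd N p.2 k)%:R - p.1 0 k * (J == wrd N p.2 i)%:R).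

Lemma cp_anti i k J : cp i k J = - cp k i J.
Proof. by rewrite /cp -sumrN; apply: eq_bigr => p _; rewrite opprB. Qed.

Definition Xp (x : 'rV[R]_n.+1) : 'rV[R]_n.+1 := \sum_(p <- s0) monom p.2 x *: p.1.

Lemma sum_delta' (U : finType) (a : U) (F : U -> R) : \sum_K (K == a)%:R * F K = F a.
Proof.
rewrite (bigD1 a) //= eqxx mul1r big1 ?addr0 // => K /negbTE ->; by rewrite mul0r.
Qed.

Lemma sum_delta2 (a : R) (w : TS n N) (F : TS n N -> R) :
  \sum_J a * (J == w)%:R * F J = a * F w.
Proof. under eq_bigr do rewrite -mulrA. by rewrite -mulr_sumr sum_delta'. Qed.

Lemma cp_sum i k x :
  \sum_J cp i k J * phiS J x = Xp x 0 i * x 0 k - Xp x 0 k * x 0 i.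
Proof.
rewrite /cp /Xp !summxE.
under eq_bigr => J _ do rewrite mulr_suml.
rewrite exchange_big /= !mulr_suml -sumrB big_seq [RHS]big_seq.
apply: eq_bigr => p ps.
have hp : (\sum_i0 p.2 i0 <= N)%N by move/allP: hs0 => /(_ p ps).
under eq_bigr do rewrite mulrBl.
rewrite sumrB !sum_delta2 !phiS_wrd // !mxE.
by ring.
Qed.

Definition cS (s1 s2 J : TS n N) : R :=
  (s1.1 == s2.1)%:R *
  \sum_(r < N.+1 | (r < s1.1)%N) (s2.2 == upd s1.2 r (s2.2 r))%:R * cp (s1.2 r) (s2.2 r) J.

Lemma cS_anti s1 s2 J : cS s1 s2 J = - cS s2 s1 J.
Proof.
rewrite /cS eq_sym; case: eqP => [E|_]; last by rewrite !mul0r oppr0.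
rewrite E !mul1r -sumrN; apply: eq_bigr => r _.
by rewrite upd_sym cp_anti mulrN.
Qed.


Lemma sum_pairS (F : TS n N -> R) :
  \sum_s F s = \sum_(e : 'I_N.+2) \sum_(K : {ffun 'I_N.+1 -> 'I_n.+1}) F (e, K).
Proof. by rewrite pair_bigA; apply: eq_bigr => -[]. Qed.

Lemma sum_delta3 (U : finType) (a : U) (F : U -> R) : \sum_K (a == K)%:R * F K = F a.
Proof. under eq_bigr do rewrite eq_sym. exact: sum_delta'. Qed.

Lemma tangent_sum x i : on_sphere x -> dotv x (Xp x) = 0 ->
  \sum_k (Xp x 0 i * x 0 k - Xp x 0 k * x 0 i) * x 0 k = Xp x 0 i.
Proof.
rewrite /on_sphere /dotv => h1 h2.
transitivity (Xp x 0 i * (\sum_k x 0 k * x 0 k) - (\sum_k x 0 k * Xp x 0 k) * x 0 i).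
  rewrite mulr_sumr mulr_suml -sumrB; apply: eq_bigr => k _; ring.
by rewrite h1 h2 mulr1 mul0r subr0.
Qed.

Lemma sphere_id x e I : on_sphere x -> dotv x (Xp x) = 0 ->
  'D_(Xp x) (phiS (e, I)) x = \sum_K (\sum_J cS (e, I) K J * phiS J x) * phiS K x.
Proof.
move=> hx ht.
set A := fun i k => Xp x 0 i * x 0 k - Xp x 0 k * x 0 i.
have Step1 : forall e' K, \sum_J cS (e, I) (e', K) J * phiS J x =
   (e == e')%:R * \sum_(r < N.+1 | (r < e)%N) (K == upd I r (K r))%:R * A (I r) (K r).
  move=> e' K; rewrite /cS /=.
  under eq_bigr do rewrite -mulrA mulr_suml.
  rewrite -mulr_sumr exchange_big /=; congr (_ * _); apply: eq_bigr => r _.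
  under eq_bigr do rewrite -mulrA.
  by rewrite -mulr_sumr cp_sum.
rewrite phiS_D sum_pairS; symmetry.
under eq_bigr => e' _ do under eq_bigr => K _ do rewrite Step1 -mulrA.
under eq_bigr => e' _ do rewrite -mulr_sumr.
rewrite sum_delta3.
under eq_bigr => K _ do rewrite mulr_suml.
rewrite exchange_big /=; apply: eq_bigr => r hr.
under eq_bigr => K _ do rewrite -mulrA.
rewrite (sum_upd I r (fun K => A (I r) (K r) * phiS (e, K) x)).
transitivity (\sum_k (A (I r) k * x 0 k) *
   \prod_(r' < N.+1 | (r' < e)%N && (r' != r)) x 0 (I r')).
  apply: eq_bigr => k _; rewrite /= phiS_upd // /upd ffunE eqxx mulrA //.
by rewrite -mulr_suml tangent_sum.
Qed.
End SphereC.

Section Trig.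
Variable R : realType.

Lemma two_pi_nat (k : nat) : 2 * pi * k%:R = (pi : R) *+ 2 *+ k.
Proof. by rewrite mulr_natr mulr_natl. Qed.

Lemma cos_int (a : R) (z : int) : cos (a + 2 * pi * z%:~R) = cos a.
Proof.
case: z => k.
  by rewrite -[(Posz k)%:~R]/(k%:R) two_pi_nat (periodicn (@cosD2pi R)).
rewrite NegzE mulrNz mulrN.
have := periodicn (@cosD2pi R) k.+1 (a - 2 * pi * (k.+1)%:~R).
by rewrite -[(Posz k.+1)%:~R]/(k.+1%:R) two_pi_nat subrK => <-.
Qed.

Lemma sin_int (a : R) (z : int) : sin (a + 2 * pi * z%:~R) = sin a.
Proof.
case: z => k.
  by rewrite -[(Posz k)%:~R]/(k%:R) two_pi_nat (periodicn (@sinD2pi R)).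
rewrite NegzE mulrNz mulrN.
have := periodicn (@sinD2pi R) k.+1 (a - 2 * pi * (k.+1)%:~R).
by rewrite -[(Posz k.+1)%:~R]/(k.+1%:R) two_pi_nat subrK => <-.
Qed.

Lemma cos_eq1 (u : R) : cos u = 1 -> exists z : int, u = 2 * pi * z%:~R.
Proof.
move=> cu.
have p2 : 0 < 2 * pi :> R by rewrite mulr_gt0 // pi_gt0.
set z := Num.floor (u / (2 * pi)).
set w := u - 2 * pi * z%:~R.
have hw0 : 0 <= w.
  rewrite subr_ge0 mulrC -ler_pdivlMr //; exact: floor_le.
have hw1 : w < 2 * pi.
  have := floorD1_gt (u / (2 * pi)); rewrite ltr_pdivrMr // intrD mulrDl mul1r => h.
  rewrite /w; move: h; rewrite -/z; set zz := z%:~R; set p := pi; move=> h; lra.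
have cw : cos w = 1 by rewrite -(cos_int w z) subrK.
have w0 : w = 0.
  have [wp|wp] := lerP w pi.
    have := @cos_inj R w 0; rewrite !in_itv /= hw0 wp lexx pi_ge0 cw cos0.
    by move=> /(_ isT isT erefl).
  have cw' : cos (2 * pi - w) = 1.
    by rewrite (_ : 2 * pi - w = - w + 2 * pi * (1%:~R)) ?cos_int ?cosN // mulr1 addrC.
  have := @cos_inj R (2 * pi - w) 0; rewrite !in_itv /= lexx pi_ge0 cw' cos0.
  have h1 : 0 <= 2 * pi - w by move: hw1; set p := pi; lra.
  have h2 : 2 * pi - w <= pi by move: wp; set p := pi; lra.
  rewrite h1 h2 => /(_ isT isT erefl) E.
  by move: hw1; rewrite -subr_gt0 E ltxx.
by exists z; rewrite -(subrK (2 * pi * z%:~R) u) -/w w0 add0r.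
Qed.

Lemma cos_sin_eq (a b : R) : cos a = cos b -> sin a = sin b ->
  exists z : int, a - b = 2 * pi * z%:~R.
Proof.
move=> ca sa; apply: cos_eq1; rewrite cosB ca sa -!expr2; exact: cos2Dsin2.
Qed.

End Trig.

Section TorusA.
Variables (R : realType) (n N : nat).

Definition TB := {ffun 'I_n -> 'I_(N.+1).*2.+1}.
Definition fr (l : TB) (i : 'I_n) : int := (l i)%:Z - (N.+1)%:Z.
Definition theta (l : TB) (x : 'rV[R]_n) : R := 2 * pi * \sum_i (fr l i)%:~R * x 0 i.
Definition phiT (s : bool * TB) (x : 'rV[R]_n) : R :=
  if s.1 then sin (theta s.2 x) else cos (theta s.2 x).

Lemma Cl_theta l : Cl (theta l).
Proof.
apply: (Cl_mul (f := fun _ => 2 * pi)); first exact: Cl_cst.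
apply: Cl_sum => i; apply: (Cl_mul (f := fun _ => (fr l i)%:~R)); [exact: Cl_cst | exact: Cl_coord].
Qed.

Lemma Cl_phiT s : Cl (phiT s).
Proof. case: s => [[] l]; [apply: Cl_sin | apply: Cl_cos]; exact: Cl_theta. Qed.

Lemma D_cmul m (f : 'rV[R]_m -> R) a x v : differentiable f x ->
  'D_v (fun y => a * f y) x = a * 'D_v f x.
Proof.
move=> df; have -> : (fun y => a * f y) = (fun _ => a) * f by [].
rewrite deriveM; [|exact: derivable_cst|exact: diff_derivable].
by rewrite derive_cst /GRing.scale /= mulr0 addr0.
Qed.

Lemma D_lin_seq m (r : seq 'I_m) (a : 'I_m -> R) (x v : 'rV[R]_m) :
  'D_v (fun y : 'rV[R]_m => \sum_(i <- r) a i * y 0 i) x = \sum_(i <- r) a i * v 0 i.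
Proof.
elim: r => [|j r IH].
  have -> : (fun y : 'rV[R]_m => \sum_(i <- [::]) a i * y 0 i) = fun _ => 0.
    by apply/funext => y; rewrite big_nil.
  by rewrite derive_cst big_nil.
have -> : (fun y : 'rV[R]_m => \sum_(i <- j :: r) a i * y 0 i) =
   (fun y => a j * y 0 j) + (fun y => \sum_(i <- r) a i * y 0 i).
  by apply/funext => y; rewrite big_cons.
have C1 : Cl (fun y : 'rV[R]_m => a j * y 0 j).
  by apply: (Cl_mul (f := fun _ => a j)); [exact: Cl_cst | exact: Cl_coord].
have C2 : Cl (fun y : 'rV[R]_m => \sum_(i <- r) a i * y 0 i).
  apply: Cl_sum => i; apply: (Cl_mul (f := fun _ => a i)); [exact: Cl_cst | exact: Cl_coord].
rewrite deriveD; try by apply: diff_derivable; apply: Cl_diff.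
by rewrite IH D_cmul ?D_coord ?big_cons //; exact: differentiable_coord.
Qed.

Lemma D_theta l x v : 'D_v (theta l) x = theta l v.
Proof.
rewrite /theta D_cmul ?D_lin_seq //.
apply: Cl_diff; apply: Cl_sum => i; apply: (Cl_mul (f := fun _ => (fr l i)%:~R));
  [exact: Cl_cst | exact: Cl_coord].
Qed.

Lemma D_phiT_cos l x v : 'D_v (phiT (false, l)) x = - sin (theta l x) * theta l v.
Proof. by rewrite /phiT /= derive_cos_comp ?D_theta //; apply: Cl_diff; apply: Cl_theta. Qed.

Lemma D_phiT_sin l x v : 'D_v (phiT (true, l)) x = cos (theta l x) * theta l v.
Proof. by rewrite /phiT /= derive_sin_comp ?D_theta //; apply: Cl_diff; apply: Cl_theta. Qed.

Lemma theta_add l a b : theta l (a + b) = theta l a + theta l b.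
Proof.
rewrite /theta -mulrDr -big_split; congr (_ * _); apply: eq_bigr => i _.
by rewrite mxE mulrDr.
Qed.

Lemma theta_scale l (c : R) a : theta l (c *: a) = c * theta l a.
Proof.
rewrite /theta [RHS]mulrCA [in RHS]mulr_sumr; congr (_ * _); apply: eq_bigr => i _.
by rewrite mxE mulrCA.
Qed.

Lemma theta_sum l (I : Type) (r : seq I) (F : I -> 'rV[R]_n) :
  theta l (\sum_(p <- r) F p) = \sum_(p <- r) theta l (F p).
Proof.
elim: r => [|a r IH].
  rewrite !big_nil /theta big1 ?mulr0 // => i _; by rewrite mxE mulr0.
by rewrite !big_cons theta_add IH.
Qed.

End TorusA.

Section GenSum.
Variable R : realType.
Lemma sum_pair (A B : finType) (F : A * B -> R) :
  \sum_(s : A * B) F s = \sum_(a : A) \sum_(b : B) F (a, b).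
Proof. by rewrite pair_bigA; apply: eq_bigr => -[]. Qed.

Lemma sum_deltaL (U : finType) (a : U) (F : U -> R) : \sum_K (a == K)%:R * F K = F a.
Proof.
rewrite (bigD1 a) //= eqxx mul1r big1 ?addr0 // => K; rewrite eq_sym => /negbTE ->.
by rewrite mul0r.
Qed.

Lemma sum_deltaR (U : finType) (c : R) (w : U) (F : U -> R) :
  \sum_J c * (J == w)%:R * F J = c * F w.
Proof.
under eq_bigr do rewrite -mulrA.
rewrite -mulr_sumr; congr (_ * _).
rewrite (bigD1 w) //= eqxx mul1r big1 ?addr0 // => K /negbTE ->; by rewrite mul0r.
Qed.
End GenSum.

Section TorusB.
Variables (R : realType) (n N : nat).
Variable s0 : seq (('I_n -> int) * 'rV[R]_n * 'rV[R]_n).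
Hypothesis hs0 : forall p, p \in s0 -> forall i, (absz (p.1.1 i) <= N)%N.

Definition boxk (k : 'I_n -> int) : TB n N := [ffun i => inord (absz (k i + (N.+1)%:Z)%R)].

Lemma fr_boxk k i : (absz (k i) <= N)%N -> fr (boxk k) i = k i.
Proof.
move=> h; rewrite /fr ffunE inordK; first by lia.
lia.
Qed.

Lemma theta_boxk k (x : 'rV[R]_n) : (forall i, (absz (k i) <= N)%N) ->
  theta (boxk k) x = 2 * pi * \sum_i (k i)%:~R * x 0 i.
Proof. by move=> h; rewrite /theta; congr (_ * _); apply: eq_bigr => i _; rewrite fr_boxk. Qed.

Definition Xt (x : 'rV[R]_n) : 'rV[R]_n :=
  \sum_(p <- s0) (sin (2 * pi * \sum_i (p.1.1 i)%:~R * x 0 i) *: p.1.2 +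
                  cos (2 * pi * \sum_i (p.1.1 i)%:~R * x 0 i) *: p.2).

Definition cpT (l : TB n N) (J : bool * TB n N) : R :=
  \sum_(p <- s0) (theta l p.1.2 * (J == (true, boxk p.1.1))%:R +
                  theta l p.2 * (J == (false, boxk p.1.1))%:R).

Lemma cpT_sum l x : \sum_J cpT l J * phiT J x = theta l (Xt x).
Proof.
rewrite /cpT /Xt theta_sum.
under eq_bigr do rewrite mulr_suml.
rewrite exchange_big /= big_seq [RHS]big_seq; apply: eq_bigr => p ps.
under eq_bigr do rewrite mulrDl.
rewrite big_split /= !sum_deltaR /phiT /= !theta_boxk; try exact: hs0.
by rewrite theta_add !theta_scale mulrC [X in _ + X]mulrC.
Qed.

Definition sgn (b b' : bool) : R :=
  if b then (if b' then 0 else 1) else (if b' then -1 else 0).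

Definition cT (s1 s2 J : bool * TB n N) : R :=
  (s1.2 == s2.2)%:R * sgn s1.1 s2.1 * cpT s1.2 J.

Lemma cT_anti s1 s2 J : cT s1 s2 J = - cT s2 s1 J.
Proof.
rewrite /cT eq_sym; case: eqP => [->|_]; last by rewrite !mul0r oppr0.
by case: s1 => [[] ?]; case: s2 => [[] ?]; rewrite /sgn /=; ring.
Qed.

Lemma torus_id x b l :
  'D_(Xt x) (phiT (b, l)) x = \sum_K (\sum_J cT (b, l) K J * phiT J x) * phiT K x.
Proof.
have St : forall K, \sum_J cT (b, l) K J * phiT J x = (l == K.2)%:R * sgn b K.1 * theta l (Xt x).
  by move=> K; rewrite /cT /=; under eq_bigr do rewrite -mulrA; rewrite -mulr_sumr cpT_sum.
under eq_bigr do rewrite St.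
rewrite sum_pair /=.
under eq_bigr => b' _ do under eq_bigr => l' _ do rewrite -!mulrA.
under eq_bigr => b' _ do rewrite sum_deltaL.
rewrite big_bool /sgn /=.
clear St; case: b; [rewrite D_phiT_sin | rewrite D_phiT_cos]; rewrite /phiT /theta /=; ring.
Qed.

End TorusB.

Section TorusC.
Variables (R : realType) (n N : nat).

Definition unitb (i : 'I_n) : TB n N := [ffun j => inord (if j == i then N.+2 else N.+1)].

Lemma fr_unitb i j : fr (unitb i) j = (j == i)%:Z.
Proof. rewrite /fr ffunE; case: eqP => _; rewrite inordK; lia. Qed.

Lemma theta_unitb i (x : 'rV[R]_n) : theta (unitb i) x = 2 * pi * x 0 i.
Proof.
rewrite /theta (bigD1 i) //= fr_unitb eqxx big1 ?addr0 ?mul1r //.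
by move=> j /negbTE ji; rewrite fr_unitb ji mul0r.
Qed.

Lemma phiT_periodic (s : bool * TB n N) (x z : 'rV[R]_n) : int_vec z -> phiT s (x + z) = phiT s x.
Proof.
move=> hz.
have : \sum_i (fr s.2 i)%:~R * z 0 i \is a Num.int.
  by apply: rpred_sum => i _; apply: rpredM; [exact: intr_int | exact: hz].
case/intrP => mz Hm.
have E : theta s.2 (x + z) = theta s.2 x + 2 * pi * mz%:~R.
  by rewrite theta_add /theta [in X in _ + X]Hm.
by rewrite /phiT E cos_int sin_int.
Qed.

Lemma torus_emb : torus_embedding (PsiC (@phiT R n N)).
Proof.
have dphi : forall I x, differentiable (@phiT R n N I) x by move=> I x; apply: Cl_diff; exact: Cl_phiT.
split.
- apply: PsiC_smooth; exact: Cl_phiT.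
- move=> x z hz; apply/rowP => j; rewrite !mxE; exact: phiT_periodic.
- move=> x y E i.
  have hc := PsiC_inj E (false, unitb i); have hs := PsiC_inj E (true, unitb i).
  rewrite /phiT /= !theta_unitb in hc hs.
  case: (cos_sin_eq hc hs) => z hz.
  have p2 : 2 * pi != 0 :> R by rewrite mulf_neq0 // gt_eqF // pi_gt0.
  rewrite -mulrBr in hz; rewrite !mxE; move/(mulfI p2): hz => ->; exact: intr_int.
- move=> x v E; apply/rowP => i; rewrite mxE.
  have h1 := PsiC_D (dphi^~ x) E (false, unitb i).
  have h2 := PsiC_D (dphi^~ x) E (true, unitb i).
  rewrite D_phiT_cos !theta_unitb in h1; rewrite D_phiT_sin !theta_unitb in h2.
  set th := 2 * pi * x 0 i in h1 h2.
  have : 2 * pi * v 0 i = 0.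
    set t := 2 * pi * v 0 i in h1 h2 *.
    have -> : t = t * (cos th ^+ 2 + sin th ^+ 2) by rewrite cos2Dsin2 mulr1.
    transitivity (cos th * (cos th * t) - sin th * (- sin th * t)).
      by ring.
    by rewrite h1 h2 !mulr0 subr0.
  have p2 : 2 * pi != 0 :> R by rewrite mulf_neq0 // gt_eqF // pi_gt0.
  by move=> /eqP; rewrite mulf_eq0 (negbTE p2) /= => /eqP.
Qed.

End TorusC.

Section SphereD.
Variables (R : realType) (n N : nat).

Lemma phiS_1 (i : 'I_n.+1) : @phiS R n N (inord 1, [ffun => i]) = fun x => x 0 i.
Proof.
apply/funext => x; rewrite /phiS /= inordK // (bigD1 ord0) //= ffunE big1 ?mulr1 //.
move=> r /andP[r1 rn0]; exfalso; move: rn0; rewrite -val_eqE /=.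
by move: r1; rewrite ltnS leqn0 => /eqP ->.
Qed.

Lemma sphere_emb : sphere_embedding (PsiC (@phiS R n N)).
Proof.
have dphi : forall I x, differentiable (@phiS R n N I) x by move=> I x; apply: Cl_diff; exact: Cl_phiS.
split.
- apply: PsiC_smooth; exact: Cl_phiS.
- move=> x y _ _ E; apply/rowP => i.
  by have := PsiC_inj E (inord 1, [ffun => i]); rewrite phiS_1.
- move=> x v _ _ E; apply/rowP => i.
  by have := PsiC_D (dphi^~ x) E (inord 1, [ffun => i]); rewrite phiS_1 D_coord mxE.
Qed.

End SphereD.

Unset Implicit Arguments.

Theorem proposition2p1 (R : realType) (n N : nat) :
  (* M = T^n *)
  (exists d : nat, forall X : 'rV[R]_n -> 'rV[R]_n,
     torus_polynomic_le N X ->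
     exists (Psi : 'rV[R]_n -> 'rV[R]_d) (B : 'I_d -> 'I_d -> 'I_d -> R),
       [/\ torus_embedding Psi,
           skewB B,
           (forall g : R -> 'rV[R]_n, integral_curve X g ->
              forall t : R, is_derive t 1 (Psi \o g) (quadV B (Psi (g t)))) &
           (torus_div_free X -> forall y, divergence (quadV B) y = 0)])
  /\
  (* M = S^n *)
  (exists d : nat, forall X : 'rV[R]_n.+1 -> 'rV[R]_n.+1,
     sphere_polynomic_le N X ->
     exists (Psi : 'rV[R]_n.+1 -> 'rV[R]_d) (B : 'I_d -> 'I_d -> 'I_d -> R),
       [/\ sphere_embedding Psi,
           skewB B,
           (forall g : R -> 'rV[R]_n.+1, sphere_integral_curve X g ->
              forall t : R, is_derive t 1 (Psi \o g) (quadV B (Psi (g t)))) &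
           (sphere_div_free X -> forall y, divergence (quadV B) y = 0)]).
Proof.
split.
- exists #|{: bool * (bool * TB n N)}|.
  move=> X [s [hs HX]].
  have hb : forall p, p \in s -> forall i, (absz (p.1.1 i) <= N)%N.
    move=> p ps i; move/allP: hs => /(_ p ps) /= hp.
    have : (absz (p.1.1 i) ^ 2 <= N)%N.
      apply: leq_trans hp; rewrite (bigD1 i) //=; exact: leq_addr.
    move: (absz (p.1.1 i)) => a h; nia.
  have EX : forall x, X x = Xt s x by move=> x; rewrite HX.
  exists (PsiC (@phiT R n N)), (BC (cT s)); split.
  + exact: torus_emb.
  + apply: BC_skew; exact: cT_anti.
  + move=> g hg t; apply: (PsiC_ode (P := fun _ => True) (X := X)) => //.
    * move=> I x; apply: Cl_diff; exact: Cl_phiT.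
    * move=> x _ [b l]; rewrite EX; exact: torus_id.
  + move=> _ y; apply: div_quadV; exact: cT_anti.
- exists #|{: bool * TS n N}|.
  move=> X [[s [hs HX]] htan].
  have EX : forall x, X x = Xp s x by move=> x; rewrite HX.
  exists (PsiC (@phiS R n N)), (BC (cS s)); split.
  + exact: sphere_emb.
  + apply: BC_skew; exact: cS_anti.
  + move=> g hg t; case: (hg t) => hon hder.
    apply: (PsiC_ode (P := @on_sphere R n) (X := X)) => //.
    * move=> I x; apply: Cl_diff; exact: Cl_phiS.
    * move=> x hx [e I]; rewrite EX; apply: sphere_id => //; rewrite -EX; exact: htan.
  + move=> _ y; apply: div_quadV; exact: cS_anti.
Qed.
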